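(* Let $k\geq1$, $\triangle_2=\mathrm{Conv}\{(\pm2,0),(0,\pm1)\}\subset\mathbb{R}^2$, $W_2\cong\mathbb{Z}/2\times\mathbb{Z}/2$ the group generated by $(x,y)\mapsto(-x,y)$ and $(x,y)\mapsto(x,-y)$, $b=|\partial(k\triangle_2)\cap\mathbb{Z}^2|$, and for $0\le i\le k-1$ let $T_i=\mathrm{Conv}\{(0,0),a_i,a_{i+1}\}$ with $a_i=(2i,k-i)$. Let $\delta_k:k\triangle_2\cap\mathbb{Z}^2\to\mathbb{R}$ be a fixed function with $\sum_p\delta_k(p)=1$, and let $g\in\mathrm{PL}(\triangle_2;k)^{W_2}$ satisfy (a) $\sum_{p\in k\triangle_2\cap\mathbb{Z}^2}g(p)-\int_{k\triangle_2}g\,dV\le\frac12\sum_{p\in\partial(k\triangle_2)\cap\mathbb{Z}^2}g(p)+\sum_{p\in k\triangle_2\cap\mathbb{Z}^2}\delta_k(p)g(p)$, with equality only if $g$ is constant; and (b) $\frac{(b+2)|W_2|}{2b\,\mathrm{vol}(T_0)}\sum_{i=0}^{k-1}\int_{T_i}g\geq\frac12\sum_{p\in\partial(k\triangle_2)\cap\mathbb{Z}^2}g(p)+\sum_{p\in k\triangle_2\cap\mathbb{Z}^2}\delta_k(p)g(p)$, with equality only if $g$ is constant. Then $$\frac{1}{\mathrm{vol}(k\triangle_2)}\int_{k\triangle_2}g\,dV\geq\frac{1}{|k\triangle_2\cap\mathbb{Z}^2|}\sum_{p\in k\triangle_2\cap\mathbb{Z}^2}g(p),$$ with equality if and only if $g$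 is constant.
   Context: $\mathrm{PL}(\triangle;k)$: for $\phi:k\triangle\cap\mathbb{Z}^2\to\mathbb{R}$, let $f_\phi(x)=\max\{t:(x,t)\in\mathrm{graph}_\phi\}$ on $k\triangle$, where $\mathrm{graph}_\phi$ is the convex hull of $\bigcup_{x\in k\triangle\cap\mathbb{Z}^2}\{(x,t):t\le\phi(x)\}$; $\mathrm{PL}(\triangle;k)$ is the set of all such $f_\phi$, and $\mathrm{PL}(\triangle;k)^{W}$ the $W$-invariant ones. $\mathrm{vol}$ is Lebesgue area. *)

(* Defs.v *)
From Stdlib Require Import Reals Lra List ZArith.
From Stdlib Require Import ClassicalDescription.
Open Scope R_scope.

Definition pt := (R * R)%type.

Fixpoint sumR {A : Type} (f : A -> R) (l : list A) : R :=
  match l with nil => 0 | x :: t => f x + sumR f t end.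

Definition zrange (lo : Z) (len : nat) : list Z :=
  map (fun m => (lo + Z.of_nat m)%Z) (seq 0 len).

(* k * triangle_2, triangle_2 = Conv{(+-2,0),(0,+-1)} = {|x|/2 + |y| <= 1} *)
Definition kTri2 (k : nat) (p : pt) : Prop :=
  Rabs (fst p) / 2 + Rabs (snd p) <= INR k.

Definition lat (k : nat) : list (Z * Z) :=
  filter (fun q => (Z.abs (fst q) + 2 * Z.abs (snd q) <=? 2 * Z.of_nat k)%Z)
    (list_prod (zrange (- 2 * Z.of_nat k) (4 * k + 1))
               (zrange (- Z.of_nat k) (2 * k + 1))).

Definition bdry (k : nat) : list (Z * Z) :=
  filter (fun q => (Z.abs (fst q) + 2 * Z.abs (snd q) =? 2 * Z.of_nat k)%Z) (lat k).

Definition Zpt (q : Z * Z) : pt := (IZR (fst q), IZR (snd q)).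

(* Convex hull of a set S in R^3 = R^2 x R: finite convex combinations *)
Definition in_conv3 (S : pt * R -> Prop) (z : pt * R) : Prop :=
  exists l : list ((pt * R) * R),
    Forall (fun w => S (fst w) /\ 0 <= snd w) l /\
    sumR snd l = 1 /\
    fst (fst z) = sumR (fun w => snd w * fst (fst (fst w))) l /\
    snd (fst z) = sumR (fun w => snd w * snd (fst (fst w))) l /\
    snd z = sumR (fun w => snd w * snd (fst w)) l.

Definition graph_phi (k : nat) (phi : Z * Z -> R) : pt * R -> Prop :=
  in_conv3 (fun z => exists q, In q (lat k) /\ fst z = Zpt q /\ snd z <= phi q).

(* g in PL(triangle_2; k): g = f_phi on k triangle_2 for some phi *)
Definition in_PL (k : nat) (g : pt -> R) : Prop :=
  exists phi : Z * Z -> R, forall x, kTri2 k x ->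
    graph_phi k phi (x, g x) /\ (forall t, graph_phi k phi (x, t) -> t <= g x).

Definition W2_invariant (k : nat) (g : pt -> R) : Prop :=
  forall x y, kTri2 k (x, y) -> g (- x, y) = g (x, y) /\ g (x, - y) = g (x, y).

Definition in_PL_W2 (k : nat) (g : pt -> R) : Prop := in_PL k g /\ W2_invariant k g.

Definition const_on (D : pt -> Prop) (g : pt -> R) : Prop :=
  exists c, forall p, D p -> g p = c.

Definition a_pt (k i : nat) : pt := (2 * INR i, INR k - INR i).
Definition T (k i : nat) (p : pt) : Prop :=
  exists l0 l1 l2, 0 <= l0 /\ 0 <= l1 /\ 0 <= l2 /\ l0 + l1 + l2 = 1 /\
    fst p = l1 * fst (a_pt k i) + l2 * fst (a_pt k (S i)) /\
    snd p = l1 * snd (a_pt k i) + l2 * snd (a_pt k (S i)).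

Definition ind (D : pt -> Prop) (p : pt) : R :=
  if excluded_middle_informative (D p) then 1 else 0.

(* Riemann integral of f over a region D contained in the box [-B,B]^2:
   limit of Riemann sums of f * 1_D over uniform grids of mesh 1/n,
   with arbitrary tags. *)
Definition riemann_int (B : nat) (D : pt -> Prop) (f : pt -> R) (I : R) : Prop :=
  forall eps, 0 < eps -> exists N : nat, forall n : nat, (N <= n)%nat -> (0 < n)%nat ->
    forall tag : Z * Z -> pt,
      (forall c, IZR (fst c) / INR n <= fst (tag c) <= (IZR (fst c) + 1) / INR n /\
                 IZR (snd c) / INR n <= snd (tag c) <= (IZR (snd c) + 1) / INR n) ->
      Rabs (sumR (fun c => ind D (tag c) * f (tag c))
              (list_prod (zrange (- Z.of_nat (B * n)) (2 * B * n))
                         (zrange (- Z.of_nat (B * n)) (2 * B * n)))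
              / (INR n * INR n) - I) < eps.

Definition sum_lat (k : nat) (g : pt -> R) : R := sumR (fun q => g (Zpt q)) (lat k).
Definition sum_bdry (k : nat) (g : pt -> R) : R := sumR (fun q => g (Zpt q)) (bdry k).
Definition sum_delta (k : nat) (delta : Z * Z -> R) (g : pt -> R) : R :=
  sumR (fun q => delta q * g (Zpt q)) (lat k).

(* Main.v *)
Require Import Defs.
From Stdlib Require Import Reals List ZArith.
From Stdlib Require Import Lra Lia Permutation ClassicalDescription IndefiniteDescription.
Open Scope R_scope.

Lemma sumR_cons {A} (f : A -> R) x l : sumR f (x :: l) = f x + sumR f l.
Proof. reflexivity. Qed.

Lemma sumR_app {A} (f : A -> R) l1 l2 : sumR f (l1 ++ l2) = sumR f l1 + sumR f l2.
Proof. induction l1; simpl; [ring| rewrite IHl1; ring]. Qed.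

Lemma sumR_ext {A} (f h : A -> R) l : (forall x, In x l -> f x = h x) -> sumR f l = sumR h l.
Proof. induction l; simpl; intros H; auto. rewrite H, IHl; auto. Qed.

Lemma sumR_plus {A} (f h : A -> R) l : sumR (fun x => f x + h x) l = sumR f l + sumR h l.
Proof. induction l; simpl; [ring| rewrite IHl; ring]. Qed.

Lemma sumR_scal {A} (f : A -> R) c l : sumR (fun x => c * f x) l = c * sumR f l.
Proof. induction l; simpl; [ring| rewrite IHl; ring]. Qed.

Lemma sumR_div {A} (f : A -> R) c l : sumR (fun x => f x / c) l = sumR f l / c.
Proof. induction l; simpl; unfold Rdiv in *; [ring| rewrite IHl; ring]. Qed.

Lemma sumR_map {A B} (f : B -> R) (m : A -> B) l : sumR f (map m l) = sumR (fun x => f (m x)) l.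
Proof. induction l; simpl; auto. rewrite IHl; auto. Qed.

Lemma sumR_perm {A} (f : A -> R) l l' : Permutation l l' -> sumR f l = sumR f l'.
Proof. induction 1; simpl; try lra. Qed.

Lemma sumR_prod {A B} (f : A * B -> R) l1 l2 :
  sumR f (list_prod l1 l2) = sumR (fun a => sumR (fun b => f (a, b)) l2) l1.
Proof. induction l1; simpl; auto. rewrite sumR_app, sumR_map, IHl1; auto. Qed.

Lemma sumR_exchange {A B} (F : A -> B -> R) l1 l2 :
  sumR (fun a => sumR (fun b => F a b) l2) l1 = sumR (fun b => sumR (fun a => F a b) l1) l2.
Proof.
  induction l1; simpl.
  - induction l2; simpl; auto. rewrite <- IHl2; ring.
  - rewrite IHl1, <- sumR_plus. auto.
Qed.

Lemma sumR_le {A} (f h : A -> R) l : (forall x, In x l -> f x <= h x) -> sumR f l <= sumR h l.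
Proof. induction l; simpl; intros H; [lra|]. specialize (IHl (fun x Hx => H x (or_intror Hx))).
  specialize (H a (or_introl eq_refl)). lra. Qed.

Lemma sumR_const {A} c (l : list A) : sumR (fun _ => c) l = c * INR (length l).
Proof. induction l. simpl; ring. change (length (a :: l)) with (S (length l)). rewrite S_INR. simpl. rewrite IHl. ring. Qed.

Lemma sumR_zero {A} (f : A -> R) l : (forall x, In x l -> f x = 0) -> sumR f l = 0.
Proof. intros H. rewrite (sumR_ext f (fun _ => 0)) by auto. rewrite sumR_const. ring. Qed.

Lemma sumR_abs_le {A} (f h : A -> R) l e : (forall x, In x l -> Rabs (f x - h x) <= e) ->
  Rabs (sumR f l - sumR h l) <= e * INR (length l).
Proof. induction l; intros H. simpl. rewrite Rminus_0_r, Rabs_R0; lra.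
  change (length (a :: l)) with (S (length l)). rewrite S_INR. simpl. specialize (IHl (fun x Hx => H x (or_intror Hx))).
  specialize (H a (or_introl eq_refl)).
  replace (f a + sumR f l - (h a + sumR h l)) with ((f a - h a) + (sumR f l - sumR h l)) by ring.
  eapply Rle_trans; [apply Rabs_triang|]. lra. Qed.

Lemma zrange_cons lo n : zrange lo (S n) = lo :: zrange (lo + 1) n.
Proof. unfold zrange. simpl. f_equal. f_equal; lia. rewrite <- seq_shift, map_map.
  apply map_ext. intros; lia. Qed.

Lemma zrange_app lo a b : zrange lo (a + b) = zrange lo a ++ zrange (lo + Z.of_nat a) b.
Proof. revert lo; induction a; intros lo. simpl. rewrite Z.add_0_r; auto.
  simpl (S a + b)%nat. rewrite !zrange_cons, IHa. simpl. f_equal. f_equal. f_equal. lia. Qed.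

Lemma zrange_snoc lo n : zrange lo (S n) = zrange lo n ++ (lo + Z.of_nat n)%Z :: nil.
Proof. rewrite <- Nat.add_1_r, zrange_app, zrange_cons. reflexivity. Qed.

Lemma In_zrange lo n z : In z (zrange lo n) <-> (lo <= z < lo + Z.of_nat n)%Z.
Proof. unfold zrange. rewrite in_map_iff. split.
  - intros [m [<- Hm]]. apply in_seq in Hm. lia.
  - intros H. exists (Z.to_nat (z - lo)). split. lia. apply in_seq. lia. Qed.

Lemma zrange_length lo n : length (zrange lo n) = n.
Proof. unfold zrange. rewrite length_map, length_seq. auto. Qed.

Lemma NoDup_zrange lo n : NoDup (zrange lo n).
Proof. unfold zrange. apply FinFun.Injective_map_NoDup. intros x y H; lia. apply seq_NoDup. Qed.

Lemma NoDup_prod {A B} (l1 : list A) (l2 : list B) : NoDup l1 -> NoDup l2 -> NoDup (list_prod l1 l2).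
Proof. induction 1; intros H2; simpl. constructor.
  apply NoDup_app; auto. apply FinFun.Injective_map_NoDup; auto. intros u v E; injection E; auto.
  intros [a b] Hm Hm'. apply in_map_iff in Hm as [b' [E _]]. injection E as -> ->.
  apply in_prod_iff in Hm'. tauto. Qed.

Lemma sumR_minus {A} (f h : A -> R) l : sumR (fun x => f x - h x) l = sumR f l - sumR h l.
Proof. induction l; simpl; [ring| rewrite IHl; ring]. Qed.

Lemma sumR_filter {A} (f : A -> R) (p : A -> bool) l :
  sumR f (filter p l) = sumR (fun x => if p x then f x else 0) l.
Proof. induction l; simpl; auto. destruct (p a); simpl; rewrite IHl; ring. Qed.

Lemma sumR_single {A} (f : A -> R) x : sumR f (x :: nil) = f x.
Proof. simpl. ring. Qed.

Lemma count_interval (h : Z -> R) a b lo n :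
  (forall c, (a <= c <= b)%Z -> h c = 1) -> (forall c, ~(a <= c <= b)%Z -> h c = 0) ->
  sumR h (zrange lo n) = IZR (Z.max 0 (Z.min b (lo + Z.of_nat n - 1) - Z.max a lo + 1)).
Proof.
  intros H1 H0. induction n.
  - simpl. f_equal. lia.
  - rewrite zrange_snoc, sumR_app, IHn. simpl. rewrite Rplus_0_r.
    destruct (Z_le_dec a (lo + Z.of_nat n)); destruct (Z_le_dec (lo + Z.of_nat n) b).
    + rewrite H1 by lia. rewrite <- plus_IZR. f_equal. lia.
    + rewrite H0 by lia. rewrite Rplus_0_r. f_equal. lia.
    + rewrite H0 by lia. rewrite Rplus_0_r. f_equal. lia.
    + rewrite H0 by lia. rewrite Rplus_0_r. f_equal. lia.
Qed.

Lemma sum_affine a b lo n :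
  sumR (fun c => a + b * IZR c) (zrange lo n) = a * INR n + b * (INR n * IZR lo + INR n * (INR n - 1) / 2).
Proof.
  induction n.
  - unfold zrange; simpl sumR; simpl INR. field.
  - rewrite zrange_snoc, sumR_app, IHn. rewrite S_INR. simpl sumR. rewrite plus_IZR, <- INR_IZR_INZ. generalize (INR n) (IZR lo); intros. field.
Qed.

Lemma sum_abs_sym (F : Z -> R) m :
  sumR (fun c => F (Z.abs c)) (zrange (- Z.of_nat m) (2 * m + 1)) = F 0%Z + 2 * sumR F (zrange 1 m).
Proof.
  induction m.
  - simpl. ring.
  - replace (2 * S m + 1)%nat with (S (S (2 * m + 1))) by lia.
    rewrite zrange_cons, zrange_snoc, sumR_cons, sumR_app.
    replace (- Z.of_nat (S m) + 1)%Z with (- Z.of_nat m)%Z by lia.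
    rewrite IHm. rewrite zrange_snoc, sumR_app, !sumR_cons. unfold sumR at 2 4.
    replace (Z.abs (- Z.of_nat (S m))) with (1 + Z.of_nat m)%Z by lia.
    replace (Z.abs (- Z.of_nat m + Z.of_nat (2 * m + 1))) with (1 + Z.of_nat m)%Z by lia.
    ring.
Qed.

Lemma length_filter_sum {A} (f : A -> bool) l :
  INR (length (filter f l)) = sumR (fun x => if f x then 1 else 0) l.
Proof. induction l; simpl; auto. destruct (f a); simpl length; try rewrite S_INR; rewrite IHl; ring. Qed.

Lemma lat_length k : INR (length (lat k)) = 4 * INR k * INR k + 2 * INR k + 1.
Proof.
  unfold lat. rewrite length_filter_sum, sumR_prod, sumR_exchange. simpl fst; simpl snd.
  rewrite (sumR_ext _ (fun y => IZR (Z.max 0 (Z.min (2*Z.of_nat k - 2 * Z.abs y) (-2*Z.of_nat k + Z.of_nat (4*k+1) - 1)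
        - Z.max (-(2*Z.of_nat k - 2 * Z.abs y)) (-2*Z.of_nat k) + 1)))).
  2:{ intros y _. apply count_interval.
      - intros c Hc. rewrite (proj2 (Z.leb_le _ _)) by lia. auto.
      - intros c Hc. destruct (Z.leb_spec (Z.abs c + 2 * Z.abs y) (2 * Z.of_nat k)); auto. lia. }
  rewrite (sum_abs_sym (fun c => IZR (Z.max 0 (Z.min (2*Z.of_nat k - 2 * c) (-2*Z.of_nat k + Z.of_nat (4*k+1) - 1)
        - Z.max (-(2*Z.of_nat k - 2 * c)) (-2*Z.of_nat k) + 1)))).
  rewrite (sumR_ext _ (fun c => (4 * INR k + 1) + (-4) * IZR c)).
  2:{ intros c Hc. apply In_zrange in Hc.
      replace (Z.max 0 (Z.min (2*Z.of_nat k - 2 * c) (-2*Z.of_nat k + Z.of_nat (4*k+1) - 1)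
        - Z.max (-(2*Z.of_nat k - 2 * c)) (-2*Z.of_nat k) + 1)) with (4 * Z.of_nat k + 1 + (-4) * c)%Z by lia.
      rewrite plus_IZR, plus_IZR, !mult_IZR. rewrite <- INR_IZR_INZ. reflexivity. }
  rewrite sum_affine.
  replace (Z.max 0 (Z.min (2*Z.of_nat k - 2 * 0) (-2*Z.of_nat k + Z.of_nat (4*k+1) - 1)
        - Z.max (-(2*Z.of_nat k - 2 * 0)) (-2*Z.of_nat k) + 1)) with (4 * Z.of_nat k + 1)%Z by lia.
  rewrite plus_IZR, mult_IZR. rewrite <- INR_IZR_INZ. simpl IZR.
  generalize (INR k); intros; field.
Qed.

Lemma bdry_length k : (1 <= k)%nat -> INR (length (bdry k)) = 4 * INR k.
Proof.
  intros hk. unfold bdry. rewrite length_filter_sum. unfold lat. rewrite sumR_filter, sumR_prod, sumR_exchange.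
  simpl fst; simpl snd.
  rewrite (sumR_ext _ (fun y =>
     sumR (fun x => (if (Z.abs x + 2 * Z.abs y <=? 2 * Z.of_nat k)%Z then 1 else 0)
                  - (if (Z.abs x + 2 * Z.abs y <=? 2 * Z.of_nat k - 1)%Z then 1 else 0))
          (zrange (-2 * Z.of_nat k) (4 * k + 1)))).
  2:{ intros y _. apply sumR_ext. intros x _.
      destruct (Z.leb_spec (Z.abs x + 2 * Z.abs y) (2 * Z.of_nat k));
      destruct (Z.eqb_spec (Z.abs x + 2 * Z.abs y) (2 * Z.of_nat k));
      destruct (Z.leb_spec (Z.abs x + 2 * Z.abs y) (2 * Z.of_nat k - 1)); try lia; ring. }
  rewrite (sumR_ext _ (fun y => IZR (Z.max 0 (Z.min (2*Z.of_nat k - 2 * Z.abs y) (-2*Z.of_nat k + Z.of_nat (4*k+1) - 1)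
        - Z.max (-(2*Z.of_nat k - 2 * Z.abs y)) (-2*Z.of_nat k) + 1))
     - IZR (Z.max 0 (Z.min (2*Z.of_nat k - 1 - 2 * Z.abs y) (-2*Z.of_nat k + Z.of_nat (4*k+1) - 1)
        - Z.max (-(2*Z.of_nat k - 1 - 2 * Z.abs y)) (-2*Z.of_nat k) + 1)))).
  2:{ intros y _. rewrite sumR_minus. f_equal; apply count_interval.
      - intros c Hc. rewrite (proj2 (Z.leb_le _ _)) by lia. auto.
      - intros c Hc. destruct (Z.leb_spec (Z.abs c + 2 * Z.abs y) (2 * Z.of_nat k)); auto. lia.
      - intros c Hc. rewrite (proj2 (Z.leb_le _ _)) by lia. auto.
      - intros c Hc. destruct (Z.leb_spec (Z.abs c + 2 * Z.abs y) (2 * Z.of_nat k - 1)); auto. lia. }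
  rewrite (sum_abs_sym (fun c => IZR (Z.max 0 (Z.min (2*Z.of_nat k - 2 * c) (-2*Z.of_nat k + Z.of_nat (4*k+1) - 1)
        - Z.max (-(2*Z.of_nat k - 2 * c)) (-2*Z.of_nat k) + 1))
     - IZR (Z.max 0 (Z.min (2*Z.of_nat k - 1 - 2 * c) (-2*Z.of_nat k + Z.of_nat (4*k+1) - 1)
        - Z.max (-(2*Z.of_nat k - 1 - 2 * c)) (-2*Z.of_nat k) + 1)))).
  destruct k as [|k']; [lia|].
  rewrite zrange_snoc, sumR_app, sumR_single.
  rewrite (sumR_ext _ (fun _ => 2)).
  2:{ intros c Hc. apply In_zrange in Hc. rewrite <- minus_IZR.
      replace (_ - _)%Z with 2%Z by lia. reflexivity. }
  rewrite sumR_const, zrange_length, <- minus_IZR, <- minus_IZR.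
  replace (_ - _)%Z with 2%Z by lia.
  replace (Z.max 0 _ - Z.max 0 _)%Z with 1%Z by lia.
  rewrite S_INR. simpl IZR. ring.
Qed.

Definition box (B n : nat) := list_prod (zrange (- Z.of_nat (B * n)) (2 * B * n))
                                       (zrange (- Z.of_nat (B * n)) (2 * B * n)).
Definition RS (B n : nat) (D : pt -> Prop) (f : pt -> R) (tag : Z * Z -> pt) :=
  sumR (fun c => Defs.ind D (tag c) * f (tag c)) (box B n) / (INR n * INR n).
Definition valid (n : nat) (tag : Z * Z -> pt) :=
  forall c, IZR (fst c) / INR n <= fst (tag c) <= (IZR (fst c) + 1) / INR n /\
            IZR (snd c) / INR n <= snd (tag c) <= (IZR (snd c) + 1) / INR n.

Lemma ri_unfold B D f I : riemann_int B D f I ->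
  forall eps, 0 < eps -> exists N : nat, forall n : nat, (N <= n)%nat -> (0 < n)%nat ->
    forall tag, valid n tag -> Rabs (RS B n D f tag - I) < eps.
Proof. intros H eps He. destruct (H eps He) as [N HN]. exists N. intros n H1 H2 tag Ht.
  apply HN; auto. Qed.

Lemma ind_1 (D : pt -> Prop) p : D p -> Defs.ind D p = 1.
Proof. unfold Defs.ind. destruct (excluded_middle_informative (D p)); tauto. Qed.
Lemma ind_0 (D : pt -> Prop) p : ~ D p -> Defs.ind D p = 0.
Proof. unfold Defs.ind. destruct (excluded_middle_informative (D p)); tauto. Qed.

Lemma INR_big x : exists n : nat, x < INR n.
Proof. destruct (archimed x) as [H _]. exists (Z.to_nat (up x)).
  destruct (Z_le_dec 0 (up x)).
  - rewrite INR_IZR_INZ, Z2Nat.id; auto.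
  - apply Z.lt_nge in n. apply IZR_lt in n. simpl in n. pose proof (pos_INR (Z.to_nat (up x))). lra. Qed.

Definition tagc (n : nat) (c : Z * Z) : pt := (IZR (fst c) / INR n, IZR (snd c) / INR n).

Lemma div_le_pos a b N : 0 < N -> a <= b -> a / N <= b / N.
Proof. intros. unfold Rdiv. apply Rmult_le_compat_r; auto. left; apply Rinv_0_lt_compat; auto. Qed.

Lemma tagc_valid n : (0 < n)%nat -> valid n (tagc n).
Proof. intros Hn c. apply lt_0_INR in Hn. unfold tagc; simpl.
  split; split; try lra; apply div_le_pos; lra. Qed.

Lemma ri_approx B D f I J C : riemann_int B D f I ->
  (forall n, (0 < n)%nat -> exists tag, valid n tag /\ Rabs (RS B n D f tag - J) <= C / INR n) -> I = J.
Proof.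
  intros HI HJ. destruct (Req_dec I J) as [|Hne]; auto. exfalso.
  set (eps := Rabs (I - J) / 2).
  assert (He : 0 < eps). { unfold eps. assert (0 < Rabs (I - J)) by (apply Rabs_pos_lt; intro; apply Hne; lra). lra. }
  destruct (ri_unfold _ _ _ _ HI eps He) as [N HN].
  destruct (INR_big (C / eps)) as [M HM].
  set (n := (N + M + 1)%nat).
  assert (Hn : (0 < n)%nat) by (unfold n; lia).
  destruct (HJ n Hn) as [tag [Ht Hb]].
  specialize (HN n ltac:(unfold n; lia) Hn tag Ht).
  assert (HnM : INR M <= INR n) by (apply le_INR; unfold n; lia).
  assert (Hnp : 0 < INR n) by (apply lt_0_INR; auto).
  assert (C < eps * INR n). { assert (C = C / eps * eps) by (field; lra). nra. }
  assert (C / INR n < eps).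
  { apply (Rmult_lt_reg_r (INR n)); auto. replace (C / INR n * INR n) with C by (field; lra). lra. }
  assert (Rabs (I - J) <= Rabs (RS B n D f tag - I) + Rabs (RS B n D f tag - J)).
  { replace (I - J) with (-(RS B n D f tag - I) + (RS B n D f tag - J)) by ring.
    eapply Rle_trans; [apply Rabs_triang|]. rewrite Rabs_Ropp. lra. }
  unfold eps in *. lra.
Qed.

Lemma ri_scale B D f h I J c : riemann_int B D f I -> riemann_int B D h J ->
  (forall p, D p -> f p = c * h p) -> I = c * J.
Proof.
  intros HI HJ Hfh. destruct (Req_dec I (c * J)) as [|Hne]; auto. exfalso.
  set (d := Rabs (I - c * J)).
  assert (Hd : 0 < d). { unfold d. apply Rabs_pos_lt. intro; apply Hne; lra. }
  assert (Hc : 0 < Rabs c + 1) by (pose proof (Rabs_pos c); lra).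
  destruct (ri_unfold _ _ _ _ HI (d / 2) ltac:(lra)) as [N1 H1].
  destruct (ri_unfold _ _ _ _ HJ (d / 2 / (Rabs c + 1))) as [N2 H2].
  { apply Rdiv_lt_0_compat; lra. }
  set (n := (N1 + N2 + 1)%nat).
  assert (Hn : (0 < n)%nat) by (unfold n; lia).
  specialize (H1 n ltac:(unfold n; lia) Hn (tagc n) (tagc_valid n Hn)).
  specialize (H2 n ltac:(unfold n; lia) Hn (tagc n) (tagc_valid n Hn)).
  assert (E : RS B n D f (tagc n) = c * RS B n D h (tagc n)).
  { unfold RS. rewrite <- sumR_div, <- sumR_div, <- sumR_scal. apply sumR_ext. intros x _.
    destruct (excluded_middle_informative (D (tagc n x))) as [Hx|Hx].
    - rewrite !ind_1, Hfh by auto. unfold Rdiv; ring.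
    - rewrite !ind_0 by auto. unfold Rdiv; ring. }
  rewrite E in H1.
  assert (Rabs (c * RS B n D h (tagc n) - c * J) <= Rabs c * (d / 2 / (Rabs c + 1))).
  { rewrite <- Rmult_minus_distr_l, Rabs_mult. apply Rmult_le_compat_l. apply Rabs_pos. lra. }
  assert (Rabs c * (d / 2 / (Rabs c + 1)) < d / 2).
  { apply (Rmult_lt_reg_r (Rabs c + 1)); auto. unfold Rdiv.
    replace (Rabs c * (d * / 2 * / (Rabs c + 1)) * (Rabs c + 1)) with (Rabs c * (d * / 2)) by (field; lra).
    pose proof (Rabs_pos c). nra. }
  assert (d <= Rabs (c * RS B n D h (tagc n) - I) + Rabs (c * RS B n D h (tagc n) - c * J)).
  { unfold d. replace (I - c * J) with (-(c * RS B n D h (tagc n) - I) + (c * RS B n D h (tagc n) - c * J)) by ring.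
    eapply Rle_trans; [apply Rabs_triang|]. rewrite Rabs_Ropp. lra. }
  lra.
Qed.

Lemma div_le_iff x y N : 0 < N -> (x / N <= y <-> x <= y * N).
Proof. intros HN. split; intros H.
  - replace x with (x / N * N) by (field; lra). apply Rmult_le_compat_r; lra.
  - replace y with (y * N / N) by (field; lra). apply div_le_pos; auto. Qed.

Lemma le_div_iff x y N : 0 < N -> (y <= x / N <-> y * N <= x).
Proof. intros HN. split; intros H.
  - replace x with (x / N * N) by (field; lra). apply Rmult_le_compat_r; lra.
  - replace y with (y * N / N) by (field; lra). apply div_le_pos; auto. Qed.

Lemma Rabs_IZR_div a n : (0 < n)%nat -> Rabs (IZR a / INR n) = IZR (Z.abs a) / INR n.
Proof. intros Hn. apply lt_0_INR in Hn. unfold Rdiv. rewrite Rabs_mult, Rabs_inv, abs_IZR.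
  rewrite (Rabs_pos_eq (INR n)) by lra. auto. Qed.

Lemma IZR_INR_mul k n : INR k * INR n = IZR (Z.of_nat k * Z.of_nat n).
Proof. rewrite mult_IZR, <- !INR_IZR_INZ. auto. Qed.

Lemma kTri2_tagc k n a b : (0 < n)%nat ->
  (kTri2 k (tagc n (a, b)) <-> (Z.abs a + 2 * Z.abs b <= 2 * (Z.of_nat k * Z.of_nat n))%Z).
Proof.
  intros Hn. unfold kTri2, tagc. simpl fst; simpl snd. rewrite !Rabs_IZR_div by auto.
  pose proof (lt_0_INR _ Hn) as HN.
  replace (IZR (Z.abs a) / INR n / 2 + IZR (Z.abs b) / INR n) with
    ((IZR (Z.abs a) + 2 * IZR (Z.abs b)) / (2 * INR n)) by (field; lra).
  rewrite div_le_iff by lra.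
  replace (INR k * (2 * INR n)) with (2 * (INR k * INR n)) by ring.
  rewrite IZR_INR_mul. split; intros H.
  - apply le_IZR. rewrite plus_IZR, !(mult_IZR 2). lra.
  - apply IZR_le in H. rewrite plus_IZR, !(mult_IZR 2) in H. lra.
Qed.

Lemma vtot_val k vtot : (1 <= k)%nat -> riemann_int (2 * k) (kTri2 k) (fun _ => 1) vtot ->
  vtot = 4 * INR k * INR k.
Proof.
  intros hk H. apply (ri_approx _ _ _ _ _ (2 * INR k) H).
  intros n Hn. exists (tagc n). split. apply tagc_valid; auto.
  pose proof (lt_0_INR _ Hn) as HN.
  assert (Hs : sumR (fun c => Defs.ind (kTri2 k) (tagc n c) * 1) (box (2 * k) n)
               = 4 * (INR k * INR n) * (INR k * INR n) + 2 * (INR k * INR n)).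
  { set (m := (k * n)%nat).
    assert (Hm : (1 <= m)%nat) by (unfold m; nia).
    rewrite (sumR_ext _ (fun c => if (Z.abs (fst c) + 2 * Z.abs (snd c) <=? 2 * Z.of_nat m)%Z then 1 else 0)).
    2:{ intros [a b] _. simpl fst; simpl snd. destruct (Z.leb_spec (Z.abs a + 2 * Z.abs b) (2 * Z.of_nat m)).
        - rewrite ind_1. ring. apply kTri2_tagc; auto. unfold m in *. lia.
        - rewrite ind_0. ring. rewrite kTri2_tagc by auto. unfold m in *. lia. }
    unfold box. rewrite sumR_prod, sumR_exchange. simpl fst; simpl snd.
    replace (2 * k * n)%nat with (2 * m)%nat by (unfold m; lia).
    replace (2 * (2 * k) * n)%nat with (m + ((2 * m + 1) + (m - 1)))%nat by (unfold m; lia).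
    rewrite (sumR_ext _ (fun y => IZR (Z.max 0 (Z.min (2 * Z.of_nat m - 2 * Z.abs y)
         (- Z.of_nat (2 * m) + Z.of_nat (m + ((2 * m + 1) + (m - 1))) - 1)
        - Z.max (-(2 * Z.of_nat m - 2 * Z.abs y)) (- Z.of_nat (2 * m)) + 1)))).
    2:{ intros y _. apply count_interval.
      - intros c Hc. rewrite (proj2 (Z.leb_le _ _)) by lia. auto.
      - intros c Hc. destruct (Z.leb_spec (Z.abs c + 2 * Z.abs y) (2 * Z.of_nat m)); auto. lia. }
    rewrite (zrange_app _ m), (zrange_app _ (2 * m + 1) (m - 1)), !sumR_app.
    rewrite (sumR_zero _ (zrange (- Z.of_nat (2 * m)) m)).
    2:{ intros y Hy. apply In_zrange in Hy. replace (Z.max 0 _) with 0%Z by lia. auto. }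
    rewrite (sumR_zero _ (zrange (_ + _ + _) (m - 1))).
    2:{ intros y Hy. apply In_zrange in Hy. replace (Z.max 0 _) with 0%Z by lia. auto. }
    replace (- Z.of_nat (2 * m) + Z.of_nat m)%Z with (- Z.of_nat m)%Z by lia.
    rewrite (sum_abs_sym (fun c => IZR (Z.max 0 (Z.min (2 * Z.of_nat m - 2 * c)
         (- Z.of_nat (2 * m) + Z.of_nat (m + ((2 * m + 1) + (m - 1))) - 1)
        - Z.max (-(2 * Z.of_nat m - 2 * c)) (- Z.of_nat (2 * m)) + 1)))).
    rewrite (sumR_ext _ (fun c => (4 * INR m + 1) + (-4) * IZR c)).
    2:{ intros c Hc. apply In_zrange in Hc.
      replace (Z.max 0 _) with (4 * Z.of_nat m + 1 + (-4) * c)%Z by lia.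
      rewrite plus_IZR, plus_IZR, !mult_IZR. rewrite <- INR_IZR_INZ. reflexivity. }
    rewrite sum_affine.
    replace (Z.max 0 _) with (4 * Z.of_nat m)%Z by lia.
    rewrite mult_IZR, <- INR_IZR_INZ. unfold m. rewrite mult_INR. simpl IZR.
    generalize (INR k) (INR n); intros; field. }
  unfold RS. rewrite Hs.
  replace ((4 * (INR k * INR n) * (INR k * INR n) + 2 * (INR k * INR n)) / (INR n * INR n) - 4 * INR k * INR k)
    with (2 * INR k / INR n) by (field; lra).
  rewrite Rabs_pos_eq. lra. unfold Rdiv. apply Rmult_le_pos. pose proof (pos_INR k); lra. left; apply Rinv_0_lt_compat; lra.
Qed.

Definition u (k i : nat) (x y : R) := (INR k - INR i) * x - 2 * INR i * y.

Lemma T_char k i x y : (i < k)%nat ->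
  (T k i (x, y) <-> (0 <= u k i x y /\ u k (S i) x y <= 0 /\ x + 2 * y <= 2 * INR k)).
Proof.
  intros Hik. assert (HK : INR i + 1 <= INR k) by (rewrite <- S_INR; apply le_INR; lia).
  pose proof (pos_INR i).
  unfold u, T, a_pt. cbn [fst snd]. rewrite S_INR. split.
  - intros [l0 [l1 [l2 [H0 [H1 [H2 [Hs [Hx Hy]]]]]]]]. subst x y.
    split; [|split].
    + match goal with |- 0 <= ?e => replace e with (2 * INR k * l2) by ring end.
      apply Rmult_le_pos; lra.
    + match goal with |- ?e <= 0 => replace e with (- (2 * INR k * l1)) by ring end.
      assert (0 <= 2 * INR k * l1) by (apply Rmult_le_pos; lra). lra.
    + match goal with |- ?e <= _ => replace e with (2 * INR k * (l1 + l2)) by ring end.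
      assert (0 <= 2 * INR k * l0) by (apply Rmult_le_pos; lra).
      replace l0 with (1 - l1 - l2) in H3 by lra. nra.
  - intros [Ha [Hb Hc]].
    exists (1 - ((2 * (INR i + 1)) * y - (INR k - (INR i + 1)) * x) / (2 * INR k)
              - ((INR k - INR i) * x - 2 * INR i * y) / (2 * INR k)),
           (((2 * (INR i + 1)) * y - (INR k - (INR i + 1)) * x) / (2 * INR k)),
           (((INR k - INR i) * x - 2 * INR i * y) / (2 * INR k)).
    assert (Hk : 0 < INR k) by lra.
    repeat split.
    + match goal with |- 0 <= ?e => replace e with ((2 * INR k - (x + 2 * y)) / (2 * INR k)) by (field; lra) end.
      apply Rmult_le_pos; [lra| left; apply Rinv_0_lt_compat; lra].
    + apply Rmult_le_pos; [lra| left; apply Rinv_0_lt_compat; lra].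
    + apply Rmult_le_pos; [lra| left; apply Rinv_0_lt_compat; lra].
    + field; lra.
    + field; lra.
    + field; lra.
Qed.

Lemma div_IZR_nonneg z n : (0 < n)%nat -> (0 <= IZR z / INR n <-> (0 <= z)%Z).
Proof. intros Hn. pose proof (lt_0_INR _ Hn). rewrite le_div_iff by auto. rewrite Rmult_0_l.
  split; intros. apply le_IZR; auto. apply IZR_le in H0; auto. Qed.

Lemma div_IZR_le z w n : (0 < n)%nat -> (IZR z / INR n <= IZR w / INR n <-> (z <= w)%Z).
Proof. intros Hn. pose proof (lt_0_INR _ Hn). rewrite div_le_iff by auto.
  replace (IZR w / INR n * INR n) with (IZR w) by (field; lra).
  split; intros. apply le_IZR; auto. apply IZR_le; auto. Qed.

Lemma T0_tagc k n a b : (1 <= k)%nat -> (0 < n)%nat ->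
  (T k 0 (tagc n (a, b)) <-> (0 <= a /\ (Z.of_nat k - 1) * a <= 2 * b /\
                              a + 2 * b <= 2 * (Z.of_nat k * Z.of_nat n))%Z).
Proof.
  intros hk Hn. pose proof (lt_0_INR _ Hn) as HN. unfold tagc. cbn [fst snd].
  rewrite T_char by lia. unfold u. change (INR 0) with 0. change (INR 1) with 1.
  replace ((INR k - 0) * (IZR a / INR n) - 2 * 0 * (IZR b / INR n)) with (IZR (Z.of_nat k * a) / INR n)
    by (rewrite mult_IZR, <- INR_IZR_INZ; field; lra).
  replace ((INR k - 1) * (IZR a / INR n) - 2 * 1 * (IZR b / INR n))
    with (IZR ((Z.of_nat k - 1) * a - 2 * b) / INR n)
    by (rewrite minus_IZR, !mult_IZR, minus_IZR, <- INR_IZR_INZ; field; lra).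
  replace (IZR a / INR n + 2 * (IZR b / INR n)) with (IZR (a + 2 * b) / INR n)
    by (rewrite plus_IZR, mult_IZR; field; lra).
  replace (2 * INR k) with (IZR (2 * (Z.of_nat k * Z.of_nat n)) / INR n)
    by (rewrite !mult_IZR, <- !INR_IZR_INZ; field; lra).
  replace 0 with (IZR 0 / INR n) at 2 by (field; lra).
  rewrite div_IZR_nonneg, !div_IZR_le by auto. nia.
Qed.

Definition colZ (K Mz a : Z) : Z :=
  if (0 <=? a)%Z then Z.max 0 (Z.min ((2 * Mz - a) / 2) (2 * Mz - 1) - Z.max (((K - 1) * a + 1) / 2) (- (2 * Mz)) + 1)
  else 0%Z.

Lemma colZ_neg K Mz a : (a < 0)%Z -> colZ K Mz a = 0%Z.
Proof. intros. unfold colZ. destruct (Z.leb_spec 0 a); lia. Qed.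

Lemma colZ_big K Mz Nn a : (1 <= K)%Z -> Mz = (K * Nn)%Z -> (2 * Nn < a)%Z -> colZ K Mz a = 0%Z.
Proof. intros. unfold colZ. destruct (Z.leb_spec 0 a); [|lia]. subst Mz.
  Z.div_mod_to_equations. nia. Qed.

Lemma colZ_mid K Mz Nn a : (1 <= K)%Z -> (1 <= Nn)%Z -> Mz = (K * Nn)%Z -> (0 <= a <= 2 * Nn)%Z ->
  (2 * Mz - K * a <= 2 * colZ K Mz a <= 2 * Mz - K * a + 2)%Z.
Proof. intros. unfold colZ. destruct (Z.leb_spec 0 a); [|lia]. subst Mz.
  Z.div_mod_to_equations. nia. Qed.

Lemma v0_val k v0 : (1 <= k)%nat -> riemann_int (2 * k) (T k 0) (fun _ => 1) v0 -> v0 = INR k.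
Proof.
  intros hk H. apply (ri_approx _ _ _ _ _ (INR k + 3) H).
  intros n Hn. exists (tagc n). split. apply tagc_valid; auto.
  pose proof (lt_0_INR _ Hn) as HN.
  assert (HN1 : 1 <= INR n) by (apply (le_INR 1); lia).
  set (K := Z.of_nat k). set (Nn := Z.of_nat n). set (Mz := (K * Nn)%Z).
  assert (HK : (1 <= K)%Z) by (unfold K; lia). assert (HNn : (1 <= Nn)%Z) by (unfold Nn; lia).
  assert (EK : IZR K = INR k) by (unfold K; rewrite INR_IZR_INZ; auto).
  assert (EN : IZR Nn = INR n) by (unfold Nn; rewrite INR_IZR_INZ; auto).
  assert (EM : IZR Mz = INR k * INR n) by (unfold Mz; rewrite mult_IZR, EK, EN; auto).
  set (S := sumR (fun c => Defs.ind (T k 0) (tagc n c) * 1) (box (2 * k) n)).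
  assert (HS : S = sumR (fun a => IZR (colZ K Mz a)) (zrange (- Z.of_nat (2 * k * n)) (2 * (2 * k) * n))).
  { unfold S, box. rewrite sumR_prod. apply sumR_ext. intros a _.
    destruct (Z_lt_dec a 0) as [Ha|Ha].
    - rewrite colZ_neg by auto. apply sumR_zero. intros b _. rewrite ind_0. ring.
      rewrite T0_tagc by auto. lia.
    - unfold colZ. rewrite (proj2 (Z.leb_le _ _)) by lia.
      replace (2 * Mz - 1)%Z with (- Z.of_nat (2 * k * n) + Z.of_nat (2 * (2 * k) * n) - 1)%Z
        by (unfold Mz, K, Nn; rewrite !Nat2Z.inj_mul; lia).
      replace (- (2 * Mz))%Z with (- Z.of_nat (2 * k * n))%Z by (unfold Mz, K, Nn; rewrite !Nat2Z.inj_mul; lia).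
      apply count_interval.
      + intros b Hb. rewrite ind_1. ring. rewrite T0_tagc by auto. fold K Nn. unfold Mz in Hb.
        Z.div_mod_to_equations. nia.
      + intros b Hb. rewrite ind_0. ring. rewrite T0_tagc by auto. fold K Nn. unfold Mz in Hb.
        intros [h1 [h2 h3]]. apply Hb. Z.div_mod_to_equations. nia. }
  replace (2 * (2 * k) * n)%nat with (2 * k * n + (2 * n + (2 * k * n - 2 * n)))%nat in HS by nia.
  rewrite (zrange_app _ (2 * k * n)), (zrange_app _ (2 * n)), !sumR_app in HS.
  replace (- Z.of_nat (2 * k * n) + Z.of_nat (2 * k * n))%Z with 0%Z in HS by lia.
  replace (0 + Z.of_nat (2 * n))%Z with (2 * Nn)%Z in HS by (unfold Nn; lia).
  rewrite (sumR_zero _ (zrange (- Z.of_nat (2 * k * n)) (2 * k * n))) in HS.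
  2:{ intros a Ha. apply In_zrange in Ha. rewrite colZ_neg by lia. auto. }
  set (L := sumR (fun a => INR k * INR n + (- INR k / 2) * IZR a) (zrange 0 (2 * n))).
  assert (HL : L = INR k * INR n * INR n + INR k * INR n / 2).
  { unfold L. rewrite sum_affine. rewrite mult_INR. simpl IZR. change (INR 2) with 2.
    generalize (INR k) (INR n); intros; field. }
  assert (Hmid1 : L <= sumR (fun a => IZR (colZ K Mz a)) (zrange 0 (2 * n))).
  { apply sumR_le. intros a Ha. apply In_zrange in Ha.
    pose proof (colZ_mid K Mz Nn a HK HNn eq_refl ltac:(unfold Nn in *; lia)) as [h1 h2].
    apply IZR_le in h1. rewrite minus_IZR, (mult_IZR K) in h1. repeat rewrite (mult_IZR 2) in h1. rewrite EM in h1.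
    rewrite EK in h1. lra. }
  assert (Hmid2 : sumR (fun a => IZR (colZ K Mz a)) (zrange 0 (2 * n)) <= L + 2 * INR n).
  { replace (2 * INR n) with (sumR (fun _ => 1) (zrange 0 (2 * n))).
    2:{ rewrite sumR_const, zrange_length, mult_INR. simpl INR. ring. }
    unfold L. rewrite <- sumR_plus. apply sumR_le. intros a Ha. apply In_zrange in Ha.
    pose proof (colZ_mid K Mz Nn a HK HNn eq_refl ltac:(unfold Nn in *; lia)) as [h1 h2].
    apply IZR_le in h2. rewrite plus_IZR, minus_IZR, (mult_IZR K) in h2. repeat rewrite (mult_IZR 2) in h2. rewrite EM in h2.
    rewrite EK in h2. lra. }
  assert (Hr1 : 0 <= sumR (fun a => IZR (colZ K Mz a)) (zrange (2 * Nn) (2 * k * n - 2 * n))).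
  { rewrite <- (sumR_zero (fun _ => 0) (zrange (2 * Nn) (2 * k * n - 2 * n))) by auto.
    apply sumR_le. intros a Ha. apply In_zrange in Ha. apply IZR_le. unfold colZ.
    destruct (0 <=? a)%Z; lia. }
  assert (Hr2 : sumR (fun a => IZR (colZ K Mz a)) (zrange (2 * Nn) (2 * k * n - 2 * n)) <= 1).
  { eapply Rle_trans.
    - apply (sumR_le _ (fun a => if Z.eq_dec a (2 * Nn) then 1 else 0)).
      intros a Ha. apply In_zrange in Ha. destruct (Z.eq_dec a (2 * Nn)).
      + pose proof (colZ_mid K Mz Nn a HK HNn eq_refl ltac:(lia)) as [h1 h2].
        apply IZR_le. subst a. assert (EMz : (K * (2 * Nn) = 2 * Mz)%Z) by (unfold Mz; ring). lia.
      + rewrite colZ_big with (Nn := Nn) by (auto; lia). lra.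
    - rewrite (count_interval _ (2 * Nn) (2 * Nn)).
      + apply IZR_le. lia.
      + intros c Hc. destruct (Z.eq_dec c (2 * Nn)); [auto | lia].
      + intros c Hc. destruct (Z.eq_dec c (2 * Nn)); [lia | auto]. }
  unfold RS. fold S. rewrite HS.
  set (S' := _ + _).
  assert (L <= S' <= L + 2 * INR n + 1) by (unfold S'; lra).
  rewrite HL in H0.
  assert (Hq : (S' / (INR n * INR n) - INR k) = (S' - INR k * INR n * INR n) / (INR n * INR n)) by (field; lra).
  rewrite Hq. rewrite Rabs_pos_eq.
  - rewrite div_le_iff by nra. replace ((INR k + 3) / INR n * (INR n * INR n)) with ((INR k + 3) * INR n) by (field; lra).
    assert (0 <= INR k * INR n) by (apply Rmult_le_pos; [apply pos_INR|lra]). lra.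
  - apply Rmult_le_pos. pose proof (pos_INR k). nra. left. apply Rinv_0_lt_compat. nra.
Qed.

Lemma sign_change (s f : nat -> R) k : 0 < s 0%nat -> (forall i, s (S i) < s i) ->
  (forall i, (i <= k)%nat -> s i <> 0) ->
  (forall i, (i < k)%nat -> (f i = 1 /\ 0 < s i /\ s (S i) < 0) \/ (f i = 0 /\ ~(0 < s i /\ s (S i) < 0))) ->
  sumR f (seq 0 k) = if Rlt_dec (s k) 0 then 1 else 0.
Proof.
  intros H0 Hdec Hnz Hf. induction k.
  - simpl. destruct (Rlt_dec (s 0%nat) 0); lra.
  - rewrite seq_S, sumR_app, sumR_single. simpl (0 + k)%nat.
    rewrite IHk by (intros; auto). 
    pose proof (Hdec k). pose proof (Hnz k ltac:(lia)). pose proof (Hnz (S k) ltac:(lia)).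
    destruct (Hf k ltac:(lia)) as [[-> Hc]|[-> Hc]];
    destruct (Rlt_dec (s k) 0); destruct (Rlt_dec (s (S k)) 0); try lra; exfalso; apply Hc; lra.
Qed.

Definition generic (k : nat) (p : pt) := fst p <> 0 /\ snd p <> 0 /\
  forall j, (j <= k)%nat -> u k j (Rabs (fst p)) (Rabs (snd p)) <> 0.

Definition Qp (k : nat) (p : pt) := 0 < fst p /\ 0 < snd p /\ fst p + 2 * snd p <= 2 * INR k.

Lemma T_nonneg k i x y : (i < k)%nat -> T k i (x, y) -> 0 <= x /\ 0 <= y.
Proof. intros Hik HT. apply T_char in HT; auto.
  unfold u in HT. rewrite S_INR in HT.
  assert (HK : INR i + 1 <= INR k) by (rewrite <- S_INR; apply le_INR; lia).
  pose proof (pos_INR i).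
  destruct HT as [Ha [Hb Hc]].
  (* l2 = u_i/2k >= 0, l1 = -u_{i+1}/2k >= 0; x = 2i l1 + 2(i+1) l2 *)
  assert (Hk : 0 < INR k) by lra.
  set (l1 := - ((INR k - (INR i + 1)) * x - 2 * (INR i + 1) * y)).
  set (l2 := (INR k - INR i) * x - 2 * INR i * y).
  assert (Ex : 2 * INR k * x = 2 * INR i * l1 + 2 * (INR i + 1) * l2) by (unfold l1, l2; ring).
  assert (Ey : 2 * INR k * y = (INR k - INR i) * l1 + (INR k - (INR i + 1)) * l2) by (unfold l1, l2; ring).
  assert (0 <= l1) by (unfold l1; lra). assert (0 <= l2) by (unfold l2; lra).
  split.
  - assert (0 <= 2 * INR k * x) by (rewrite Ex; apply Rplus_le_le_0_compat; apply Rmult_le_pos; lra). nra.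
  - assert (0 <= 2 * INR k * y) by (rewrite Ey; apply Rplus_le_le_0_compat; apply Rmult_le_pos; lra). nra.
Qed.

Lemma PT k p : (1 <= k)%nat -> generic k p ->
  sumR (fun i => Defs.ind (T k i) p) (seq 0 k) = Defs.ind (Qp k) p.
Proof.
  intros hk [Hx [Hy Hu]]. destruct p as [x y]. cbn [fst snd] in *.
  destruct (Rlt_dec 0 x) as [Hxp|Hxn]; [destruct (Rlt_dec 0 y) as [Hyp|Hyn]|].
  - rewrite Rabs_pos_eq in Hu by lra. rewrite (Rabs_pos_eq y) in Hu by lra.
    destruct (Rle_dec (x + 2 * y) (2 * INR k)) as [Hc|Hc].
    + rewrite ind_1 by (unfold Qp; cbn; auto).
      rewrite (sign_change (fun j => u k j x y)).
      * destruct (Rlt_dec (u k k x y) 0); auto. exfalso; apply n. unfold u. nra.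
      * unfold u. simpl INR. pose proof (lt_0_INR k ltac:(lia)). nra.
      * intros i. unfold u. rewrite S_INR. nra.
      * auto.
      * intros i Hi. destruct (excluded_middle_informative (T k i (x, y))) as [HT|HT].
        -- left. rewrite ind_1 by auto. apply T_char in HT; auto.
           pose proof (Hu i ltac:(lia)). pose proof (Hu (S i) ltac:(lia)). split; auto. lra.
        -- right. rewrite ind_0 by auto. split; auto. intros [h1 h2]. apply HT. apply T_char; auto. lra.
    + rewrite ind_0 by (unfold Qp; cbn; tauto). apply sumR_zero. intros i Hi. apply in_seq in Hi.
      rewrite ind_0; auto. rewrite T_char by lia. lra.
  - rewrite ind_0 by (unfold Qp; cbn; tauto). apply sumR_zero. intros i Hi. apply in_seq in Hi.
    rewrite ind_0; auto. intros HT. apply T_nonneg in HT; [|lia]. lra.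
  - rewrite ind_0 by (unfold Qp; cbn; tauto). apply sumR_zero. intros i Hi. apply in_seq in Hi.
    rewrite ind_0; auto. intros HT. apply T_nonneg in HT; [|lia]. lra.
Qed.

Definition fx (p : pt) : pt := (- fst p, snd p).
Definition fy (p : pt) : pt := (fst p, - snd p).
Definition fxy (p : pt) : pt := (- fst p, - snd p).

Lemma generic_fx k p : generic k p -> generic k (fx p).
Proof. unfold generic, fx; cbn [fst snd]. rewrite Rabs_Ropp. intros [h1 [h2 h3]]. repeat split; auto. lra. Qed.
Lemma generic_fy k p : generic k p -> generic k (fy p).
Proof. unfold generic, fy; cbn [fst snd]. rewrite Rabs_Ropp. intros [h1 [h2 h3]]. repeat split; auto. lra. Qed.
Lemma generic_fxy k p : generic k p -> generic k (fxy p).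
Proof. unfold generic, fxy; cbn [fst snd]. rewrite !Rabs_Ropp. intros [h1 [h2 h3]]. repeat split; auto; lra. Qed.

Definition Sf k (g : pt -> R) (q : pt) := sumR (fun i => Defs.ind (T k i) q * g q) (seq 0 k).

Lemma Sf_eq k g q : (1 <= k)%nat -> generic k q -> Sf k g q = Defs.ind (Qp k) q * g q.
Proof. intros hk Hg. unfold Sf. rewrite (sumR_ext _ (fun i => g q * Defs.ind (T k i) q)) by (intros; ring).
  rewrite sumR_scal, PT; auto. ring. Qed.

Lemma point_id k g p : (1 <= k)%nat -> W2_invariant k g -> generic k p ->
  Defs.ind (kTri2 k) p * g p = Sf k g p + Sf k g (fx p) + Sf k g (fy p) + Sf k g (fxy p).
Proof.
  intros hk HW Hg.
  rewrite !Sf_eq by (auto using generic_fx, generic_fy, generic_fxy).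
  destruct p as [x y]. destruct Hg as [Hx [Hy _]]. unfold fx, fy, fxy in *; cbn [fst snd] in *.
  unfold Qp; cbn [fst snd].
  destruct (excluded_middle_informative (kTri2 k (x, y))) as [HK|HK].
  - rewrite ind_1 by auto.
    pose proof (HW x y HK) as [Wx Wy].
    assert (HK' : kTri2 k (x, - y)) by (unfold kTri2 in *; cbn [fst snd] in *; rewrite Rabs_Ropp; auto).
    pose proof (HW x (- y) HK') as [Wxy _]. rewrite Wy in Wxy.
    unfold kTri2 in HK; cbn [fst snd] in HK.
    destruct (Rlt_dec 0 x); destruct (Rlt_dec 0 y).
    + rewrite Rabs_pos_eq in HK by lra. rewrite (Rabs_pos_eq y) in HK by lra.
      rewrite ind_1 by (cbn [fst snd]; repeat split; lra). rewrite !ind_0 by (cbn [fst snd]; intros [? [? ?]]; lra). ring.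
    + rewrite Rabs_pos_eq in HK by lra. rewrite (Rabs_left y) in HK by lra.
      rewrite (ind_0 _ (x, y)) by (cbn [fst snd]; intros [? [? ?]]; lra). rewrite (ind_0 _ (-x, y)) by (cbn [fst snd]; intros [? [? ?]]; lra).
      rewrite (ind_1 _ (x, -y)) by (cbn [fst snd]; repeat split; lra). rewrite (ind_0 _ (-x, -y)) by (cbn [fst snd]; intros [? [? ?]]; lra). rewrite Wy. ring.
    + rewrite Rabs_left in HK by lra. rewrite (Rabs_pos_eq y) in HK by lra.
      rewrite (ind_0 _ (x, y)) by (cbn [fst snd]; intros [? [? ?]]; lra). rewrite (ind_1 _ (-x, y)) by (cbn [fst snd]; repeat split; lra).
      rewrite (ind_0 _ (x, -y)) by (cbn [fst snd]; intros [? [? ?]]; lra). rewrite (ind_0 _ (-x, -y)) by (cbn [fst snd]; intros [? [? ?]]; lra). rewrite Wx. ring.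
    + rewrite Rabs_left in HK by lra. rewrite (Rabs_left y) in HK by lra.
      rewrite (ind_0 _ (x, y)) by (cbn [fst snd]; intros [? [? ?]]; lra). rewrite (ind_0 _ (-x, y)) by (cbn [fst snd]; intros [? [? ?]]; lra).
      rewrite (ind_0 _ (x, -y)) by (cbn [fst snd]; intros [? [? ?]]; lra). rewrite (ind_1 _ (-x, -y)) by (cbn [fst snd]; repeat split; lra). rewrite Wxy. ring.
  - rewrite ind_0 by auto. unfold kTri2 in HK; cbn [fst snd] in HK.
    rewrite !ind_0; [ring| | | |];
    intros [h1 [h2 h3]]; cbn [fst snd] in *; apply HK; unfold Rabs;
    destruct (Rcase_abs x), (Rcase_abs y); lra.
Qed.

Lemma avoid (L : list R) : forall a b, a < b -> exists y, a < y < b /\ ~ In y L.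
Proof.
  induction L as [|x L IH]; intros a b Hab.
  - exists ((a + b) / 2). split; [lra| auto].
  - destruct (Rle_dec x ((a + b) / 2)).
    + destruct (IH ((a + b) / 2) b ltac:(lra)) as [y [Hy Hn]]. exists y. split; [lra|].
      intros [E|E]; [lra| auto].
    + destruct (IH a ((a + b) / 2) ltac:(lra)) as [y [Hy Hn]]. exists y. split; [lra|].
      intros [E|E]; [lra| auto].
Qed.

Definition bad (k : nat) (x : R) : list R :=
  0 :: flat_map (fun j => ((INR k - INR j) * Rabs x / (2 * INR j)) ::
                          (- ((INR k - INR j) * Rabs x / (2 * INR j))) :: nil) (seq 1 k).

Lemma half_ne0 a : IZR a + / 2 <> 0.
Proof. destruct (Z_le_dec 0 a) as [h|h].
  - apply IZR_le in h. lra.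
  - assert (a <= -1)%Z by lia. apply IZR_le in H. lra. Qed.

Lemma generic_tag k n : (1 <= k)%nat -> (0 < n)%nat ->
  exists t, valid n t /\ forall c, generic k (t c).
Proof.
  intros hk Hn. pose proof (lt_0_INR _ Hn) as HN.
  assert (H : forall c : Z * Z, exists y, IZR (snd c) / INR n < y < (IZR (snd c) + 1) / INR n /\
                 ~ In y (bad k ((IZR (fst c) + / 2) / INR n))).
  { intros c. apply avoid. apply (Rmult_lt_reg_r (INR n)); auto.
    replace (IZR (snd c) / INR n * INR n) with (IZR (snd c)) by (field; lra).
    replace ((IZR (snd c) + 1) / INR n * INR n) with (IZR (snd c) + 1) by (field; lra). lra. }
  exists (fun c => ((IZR (fst c) + / 2) / INR n, proj1_sig (constructive_indefinite_description _ (H c)))).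
  split.
  - intros c. destruct (constructive_indefinite_description _ (H c)) as [y [Hy Hy2]]. cbn [fst snd proj1_sig].
    split; [split|split]; try lra; apply div_le_pos; lra.
  - intros c. destruct (constructive_indefinite_description _ (H c)) as [y [Hy2 Hy]]. cbn [fst snd proj1_sig].
    set (x := (IZR (fst c) + / 2) / INR n) in *.
    assert (Hx : x <> 0).
    { unfold x. unfold Rdiv. intro E. apply Rmult_integral in E as [E|E].
      - apply (half_ne0 (fst c)); auto.
      - apply Rinv_neq_0_compat in E; lra. }
    assert (Hax : 0 < Rabs x) by (apply Rabs_pos_lt; auto).
    unfold generic. cbn [fst snd]. split; [auto|split].
    + intros E. apply Hy. left. auto.
    + intros j Hj E. unfold u in E. destruct j as [|j].
      * change (INR 0) with 0 in E. pose proof (lt_0_INR k ltac:(lia)). nra.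
      * apply Hy. right. apply in_flat_map. exists (S j). split. apply in_seq. lia.
        assert (HJ : 0 < INR (S j)) by (apply lt_0_INR; lia).
        assert (E0 : (INR k - INR (S j)) * Rabs x = Rabs y * (2 * INR (S j))) by lra.
        assert (E' : Rabs y = (INR k - INR (S j)) * Rabs x / (2 * INR (S j))) by (rewrite E0; field; lra).
        destruct (Rcase_abs y).
        -- rewrite Rabs_left in E' by lra. right. left. lra.
        -- rewrite Rabs_pos_eq in E' by lra. left. lra.
Qed.

Definition cx (c : Z * Z) : Z * Z := (- fst c - 1, snd c)%Z.
Definition cy (c : Z * Z) : Z * Z := (fst c, - snd c - 1)%Z.
Definition cxy (c : Z * Z) : Z * Z := (- fst c - 1, - snd c - 1)%Z.

Lemma box_reindex B n (h : Z * Z -> R) m : (forall c, m (m c) = c) ->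
  (forall c, In c (box B n) -> In (m c) (box B n)) ->
  sumR (fun c => h (m c)) (box B n) = sumR h (box B n).
Proof.
  intros Hinv Hin. rewrite <- sumR_map. apply sumR_perm. apply Permutation_map_same_l.
  - apply FinFun.Injective_map_NoDup. intros x y E. rewrite <- (Hinv x), <- (Hinv y), E; auto.
    unfold box. apply NoDup_prod; apply NoDup_zrange.
  - intros c Hc. apply in_map_iff in Hc as [c' [<- Hc']]. auto.
Qed.

Lemma in_box B n a b : In (a, b) (box B n) <->
  (- Z.of_nat (B * n) <= a < Z.of_nat (B * n) /\ - Z.of_nat (B * n) <= b < Z.of_nat (B * n))%Z.
Proof. unfold box. rewrite in_prod_iff, !In_zrange. lia. Qed.

Lemma cx_box B n c : In c (box B n) -> In (cx c) (box B n).
Proof. destruct c as [a b]. unfold cx; cbn [fst snd]. rewrite !in_box. lia. Qed.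
Lemma cy_box B n c : In c (box B n) -> In (cy c) (box B n).
Proof. destruct c as [a b]. unfold cy; cbn [fst snd]. rewrite !in_box. lia. Qed.
Lemma cxy_box B n c : In c (box B n) -> In (cxy c) (box B n).
Proof. destruct c as [a b]. unfold cxy; cbn [fst snd]. rewrite !in_box. lia. Qed.

Lemma cx_inv c : cx (cx c) = c.
Proof. destruct c; unfold cx; cbn; f_equal; lia. Qed.
Lemma cy_inv c : cy (cy c) = c.
Proof. destruct c; unfold cy; cbn; f_equal; lia. Qed.
Lemma cxy_inv c : cxy (cxy c) = c.
Proof. destruct c; unfold cxy; cbn; f_equal; lia. Qed.

Definition tx (t : Z * Z -> pt) c := fx (t (cx c)).
Definition ty (t : Z * Z -> pt) c := fy (t (cy c)).
Definition txy (t : Z * Z -> pt) c := fxy (t (cxy c)).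

Lemma flip_bounds a N v : 0 < N ->
  IZR (- a - 1) / N <= v <= (IZR (- a - 1) + 1) / N -> IZR a / N <= - v <= (IZR a + 1) / N.
Proof. intros HN [h1 h2].
  replace (IZR (- a - 1)) with (- IZR a - 1) in * by (rewrite minus_IZR, opp_IZR; auto).
  replace ((- IZR a - 1 + 1) / N) with (- (IZR a / N)) in h2 by (field; lra).
  replace ((- IZR a - 1) / N) with (- ((IZR a + 1) / N)) in h1 by (field; lra).
  lra. Qed.

Lemma valid_tx n t : (0 < n)%nat -> valid n t -> valid n (tx t).
Proof. intros Hn Hv c. pose proof (lt_0_INR _ Hn). destruct (Hv (cx c)) as [h1 h2].
  unfold tx, fx, cx in *. cbn [fst snd] in *. split; auto. apply flip_bounds; auto. Qed.
Lemma valid_ty n t : (0 < n)%nat -> valid n t -> valid n (ty t).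
Proof. intros Hn Hv c. pose proof (lt_0_INR _ Hn). destruct (Hv (cy c)) as [h1 h2].
  unfold ty, fy, cy in *. cbn [fst snd] in *. split; auto. apply flip_bounds; auto. Qed.
Lemma valid_txy n t : (0 < n)%nat -> valid n t -> valid n (txy t).
Proof. intros Hn Hv c. pose proof (lt_0_INR _ Hn). destruct (Hv (cxy c)) as [h1 h2].
  unfold txy, fxy, cxy in *. cbn [fst snd] in *. split; apply flip_bounds; auto. Qed.

Lemma SS_exch k g B n (t : Z * Z -> pt) :
  sumR (fun c => Sf k g (t c)) (box B n) =
  sumR (fun i => sumR (fun c => Defs.ind (T k i) (t c) * g (t c)) (box B n)) (seq 0 k).
Proof. unfold Sf. apply sumR_exchange. Qed.

Lemma RS_decomp k g n t : (1 <= k)%nat -> W2_invariant k g -> (forall c, generic k (t c)) ->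
  RS (2 * k) n (kTri2 k) g t =
  sumR (fun i => RS (2 * k) n (T k i) g t + RS (2 * k) n (T k i) g (tx t)
               + RS (2 * k) n (T k i) g (ty t) + RS (2 * k) n (T k i) g (txy t)) (seq 0 k).
Proof.
  intros hk HW Hg. unfold RS.
  rewrite (sumR_ext _ (fun i => (sumR (fun c => Defs.ind (T k i) (t c) * g (t c)) (box (2 * k) n)
     + sumR (fun c => Defs.ind (T k i) (tx t c) * g (tx t c)) (box (2 * k) n)
     + sumR (fun c => Defs.ind (T k i) (ty t c) * g (ty t c)) (box (2 * k) n)
     + sumR (fun c => Defs.ind (T k i) (txy t c) * g (txy t c)) (box (2 * k) n)) / (INR n * INR n)))
    by (intros; unfold Rdiv; ring).
  rewrite sumR_div. f_equal.
  rewrite (sumR_ext _ (fun c => Sf k g (t c) + Sf k g (fx (t c)) + Sf k g (fy (t c)) + Sf k g (fxy (t c))))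
    by (intros; apply point_id; auto).
  rewrite !sumR_plus.
  rewrite (sumR_ext (fun c => Sf k g (fx (t c))) (fun c => Sf k g (tx t (cx c))))
    by (intros; unfold tx; rewrite cx_inv; auto).
  rewrite (sumR_ext (fun c => Sf k g (fy (t c))) (fun c => Sf k g (ty t (cy c))))
    by (intros; unfold ty; rewrite cy_inv; auto).
  rewrite (sumR_ext (fun c => Sf k g (fxy (t c))) (fun c => Sf k g (txy t (cxy c))))
    by (intros; unfold txy; rewrite cxy_inv; auto).
  rewrite (box_reindex _ _ (fun c => Sf k g (tx t c)) cx cx_inv (cx_box _ _)).
  rewrite (box_reindex _ _ (fun c => Sf k g (ty t c)) cy cy_inv (cy_box _ _)).
  rewrite (box_reindex _ _ (fun c => Sf k g (txy t c)) cxy cxy_inv (cxy_box _ _)).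
  rewrite !SS_exch. rewrite <- !sumR_plus. auto.
Qed.

Lemma abs_le_inv a b : Rabs a <= b -> - b <= a <= b.
Proof. unfold Rabs. destruct (Rcase_abs a); lra. Qed.

Lemma common_N (P : nat -> nat -> Prop) k :
  (forall i N N', P i N -> (N <= N')%nat -> P i N') ->
  (forall i, (i < k)%nat -> exists N, P i N) -> exists N, forall i, (i < k)%nat -> P i N.
Proof.
  intros Hm. induction k; intros H.
  - exists 0%nat. intros; lia.
  - destruct IHk as [N1 H1]. intros; apply H; lia.
    destruct (H k ltac:(lia)) as [N2 H2].
    exists (N1 + N2)%nat. intros i Hi. destruct (Nat.eq_dec i k) as [->|].
    + apply (Hm _ N2); auto; lia.
    + apply (Hm _ N1); [apply H1; lia| lia].
Qed.

Lemma Itot_decomp k g Itot IT : (1 <= k)%nat -> W2_invariant k g ->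
  riemann_int (2 * k) (kTri2 k) g Itot ->
  (forall i, (i < k)%nat -> riemann_int (2 * k) (T k i) g (IT i)) ->
  Itot = 4 * sumR IT (seq 0 k).
Proof.
  intros hk HW HI HT.
  assert (Hb : forall eps, 0 < eps -> Rabs (Itot - 4 * sumR IT (seq 0 k)) < eps * (1 + 4 * INR k)).
  { intros eps He.
    destruct (ri_unfold _ _ _ _ HI eps He) as [N0 H0].
    destruct (common_N (fun i N => forall n, (N <= n)%nat -> (0 < n)%nat -> forall tag, valid n tag ->
                 Rabs (RS (2 * k) n (T k i) g tag - IT i) < eps) k) as [N1 H1].
    { intros i N N' HP HN n Hn. apply HP; lia. }
    { intros i Hi. apply (ri_unfold _ _ _ _ (HT i Hi) eps He). }
    set (n := (N0 + N1 + 1)%nat).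
    assert (Hn : (0 < n)%nat) by (unfold n; lia).
    destruct (generic_tag k n hk Hn) as [t [Hv Hg]].
    specialize (H0 n ltac:(unfold n; lia) Hn t Hv).
    rewrite RS_decomp in H0 by auto.
    assert (E4 : 4 * sumR IT (seq 0 k) = sumR (fun i => IT i + IT i + IT i + IT i) (seq 0 k)).
    { rewrite <- sumR_scal. apply sumR_ext. intros; ring. }
    assert (Hs : Rabs (sumR (fun i => RS (2 * k) n (T k i) g t + RS (2 * k) n (T k i) g (tx t)
               + RS (2 * k) n (T k i) g (ty t) + RS (2 * k) n (T k i) g (txy t)) (seq 0 k)
               - sumR (fun i => IT i + IT i + IT i + IT i) (seq 0 k)) <= (4 * eps) * INR (length (seq 0 k))).
    { apply sumR_abs_le. intros i Hi. apply in_seq in Hi.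
      pose proof (H1 i ltac:(lia) n ltac:(unfold n; lia) Hn t Hv) as a1.
      pose proof (H1 i ltac:(lia) n ltac:(unfold n; lia) Hn (tx t) (valid_tx n t Hn Hv)) as a2.
      pose proof (H1 i ltac:(lia) n ltac:(unfold n; lia) Hn (ty t) (valid_ty n t Hn Hv)) as a3.
      pose proof (H1 i ltac:(lia) n ltac:(unfold n; lia) Hn (txy t) (valid_txy n t Hn Hv)) as a4.
      apply Rabs_def2 in a1, a2, a3, a4. apply Rabs_le. lra. }
    rewrite length_seq in Hs. rewrite E4.
    apply Rabs_def2 in H0. apply abs_le_inv in Hs.
    apply Rabs_def1; nra. }
  destruct (Req_dec Itot (4 * sumR IT (seq 0 k))) as [|Hne]; auto. exfalso.
  set (d := Rabs (Itot - 4 * sumR IT (seq 0 k))).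
  assert (Hd : 0 < d) by (apply Rabs_pos_lt; lra).
  assert (Hk : 0 < 1 + 4 * INR k) by (pose proof (pos_INR k); lra).
  specialize (Hb (d / (1 + 4 * INR k)) ltac:(apply Rdiv_lt_0_compat; lra)).
  fold d in Hb. replace (d / (1 + 4 * INR k) * (1 + 4 * INR k)) with d in Hb by (field; lra). lra.
Qed.

Lemma lat_in_K k q : In q (lat k) -> kTri2 k (Zpt q).
Proof. intros Hq. unfold lat in Hq. apply filter_In in Hq as [_ Hq]. apply Z.leb_le in Hq.
  destruct q as [a b]. unfold kTri2, Zpt. cbn [fst snd] in *. rewrite !Rabs_Zabs.
  apply IZR_le in Hq. rewrite plus_IZR, !mult_IZR, <- INR_IZR_INZ in Hq. lra. Qed.

Theorem lemma4p1 (k : nat) (hk : (1 <= k)%nat)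
  (delta : Z * Z -> R) (hdelta : sumR delta (lat k) = 1)
  (g : pt -> R) (hg : in_PL_W2 k g)
  (Itot : R) (HItot : riemann_int (2 * k) (kTri2 k) g Itot)
  (IT : nat -> R) (HIT : forall i, (i < k)%nat -> riemann_int (2 * k) (T k i) g (IT i))
  (vtot : R) (Hvtot : riemann_int (2 * k) (kTri2 k) (fun _ => 1) vtot)
  (v0 : R) (Hv0 : riemann_int (2 * k) (T k 0) (fun _ => 1) v0)
  (ha : sum_lat k g - Itot <= / 2 * sum_bdry k g + sum_delta k delta g /\
        (sum_lat k g - Itot = / 2 * sum_bdry k g + sum_delta k delta g ->
         const_on (kTri2 k) g))
  (hb : (INR (length (bdry k)) + 2) * 4 / (2 * INR (length (bdry k)) * v0)
          * sumR IT (seq 0 k) >= / 2 * sum_bdry k g + sum_delta k delta g /\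
        ((INR (length (bdry k)) + 2) * 4 / (2 * INR (length (bdry k)) * v0)
          * sumR IT (seq 0 k) = / 2 * sum_bdry k g + sum_delta k delta g ->
         const_on (kTri2 k) g)) :
  / vtot * Itot >= / INR (length (lat k)) * sum_lat k g /\
  (/ vtot * Itot = / INR (length (lat k)) * sum_lat k g <-> const_on (kTri2 k) g).
Proof.
  destruct hg as [_ HW].
  rewrite (bdry_length k hk) in hb. rewrite (v0_val k v0 hk Hv0) in hb.
  rewrite (vtot_val k vtot hk Hvtot). rewrite lat_length.
  assert (HS4 : sumR IT (seq 0 k) = Itot / 4).
  { rewrite (Itot_decomp k g Itot IT hk HW HItot HIT). field. }
  rewrite HS4 in hb.
  assert (HK : 1 <= INR k) by (apply (le_INR 1); lia).
  set (Kr := INR k) in *.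
  replace ((4 * Kr + 2) * 4 / (2 * (4 * Kr) * Kr) * (Itot / 4)) with ((2 * Kr + 1) / (4 * Kr * Kr) * Itot)
    in hb by (field; lra).
  set (S := sum_lat k g) in *. set (Rv := / 2 * sum_bdry k g + sum_delta k delta g) in *.
  destruct ha as [ha1 ha2]. destruct hb as [hb1 hb2].
  assert (Hpos : 0 < 4 * Kr * Kr) by nra.
  assert (Hpos2 : 0 < 4 * Kr * Kr + 2 * Kr + 1) by nra.
  assert (Hmain : S * (4 * Kr * Kr) <= Itot * (4 * Kr * Kr + 2 * Kr + 1)).
  { assert (S <= Itot + (2 * Kr + 1) / (4 * Kr * Kr) * Itot) by lra.
    replace (Itot * (4 * Kr * Kr + 2 * Kr + 1)) with ((Itot + (2 * Kr + 1) / (4 * Kr * Kr) * Itot) * (4 * Kr * Kr))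
      by (field; lra).
    apply Rmult_le_compat_r; lra. }
  split; [|split].
  - apply Rle_ge.
    replace (/ (4 * Kr * Kr + 2 * Kr + 1) * S) with (S * (4 * Kr * Kr) / ((4 * Kr * Kr) * (4 * Kr * Kr + 2 * Kr + 1)))
      by (field; lra).
    replace (/ (4 * Kr * Kr) * Itot) with (Itot * (4 * Kr * Kr + 2 * Kr + 1) / ((4 * Kr * Kr) * (4 * Kr * Kr + 2 * Kr + 1)))
      by (field; lra).
    apply div_le_pos; nra.
  - intros Heq. apply ha2.
    assert (E : S = Itot + (2 * Kr + 1) / (4 * Kr * Kr) * Itot).
    { assert (S = / (4 * Kr * Kr) * Itot * (4 * Kr * Kr + 2 * Kr + 1)).
      { rewrite Heq. field. lra. }
      rewrite H. field. lra. }
    lra.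
  - intros [c Hc].
    assert (EI : Itot = c * (4 * Kr * Kr)).
    { assert (Itot = c * vtot) as E.
      { apply (ri_scale _ _ _ _ _ _ c HItot Hvtot). intros p Hp. rewrite Hc by auto. ring. }
      rewrite E, (vtot_val k vtot hk Hvtot). auto. }
    assert (ES : S = c * (4 * Kr * Kr + 2 * Kr + 1)).
    { unfold S, sum_lat. rewrite (sumR_ext _ (fun _ => c)).
      - rewrite sumR_const, lat_length. auto.
      - intros q Hq. apply Hc. apply lat_in_K; auto. }
    rewrite EI, ES. field. lra.
Qed.
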